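(* Let $\Pi$ be a program with nested expressions and $X$ a set of atoms. If $X\not\models\Pi$, then $\Pi^X$ is classically equivalent to $\bot$. If $X\models\Pi$, then $\Pi^X$ is classically equivalent to the program obtained from $\Pi^{\underline X}$ by replacing every occurrence of every atom not belonging to $X$ by $\bot$.
   Context: Fix a set of propositional atoms. Formulas are built from atoms and $\bot$ using the binary connectives $\wedge,\vee,\to$; $\top$ abbreviates $\bot\to\bot$, $\neg F$ abbreviates $F\to\bot$, and $F\leftrightarrow G$ abbreviates $(F\to G)\wedge(G\to F)$. A theory is a set of formulas. Interpretations are sets $X$ of atoms, and $X\models F$ denotes classical satisfaction (an atom $a$ is true iff $a\in X$). The reduct $F^X$ of a formula $F$ relative to a set $X$ of atoms is defined recursively: $\bot^X=\bot$; for an atom $a$, $a^X=a$ if $a\in X$ and $a^X=\bot$ otherwise; for $\otimes\in\{\wedge,\vee,\to\}$, $(F\otimes G)^X=F^X\otimes G^X$ if $X\models F\otimes G$, and $(F\otimes G)^X=\bot$ otherwise. For a theory $\Gamma$, $\Gamma^X=\{F^X:F\in\Gamma\}$. A nested expression is a formula containing no implications other than those of the form $F\to\bot$ (i.e. $\neg F$) or $\bot\to\bot$ (i.e. $\top$). A rule with nested expressions is $F\leftarrow G$ with $F,G$ nested expressions, identified with the formula $G\to F$; a program with nested expressions is a set of such rules (so it is also a theory). The reduct $\Pi^{\underline X}$ (in the sense of Lifschitz, Tang and Turner 1999) is obtained from $\Pi$ by replacing, in each rule, each maximal subformula of the form $\neg F$ by $\top$ if $X\models\neg F$ and by $\bot$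 otherwise. *)

(* Defs.v *)
Set Implicit Arguments.

Inductive form (A : Type) : Type :=
| Bot : form A
| Atom : A -> form A
| And : form A -> form A -> form A
| Or  : form A -> form A -> form A
| Imp : form A -> form A -> form A.

Arguments Bot {A}.

Definition Top {A : Type} : form A := Imp Bot Bot.
Definition Neg {A : Type} (F : form A) : form A := Imp F Bot.

(* An interpretation is a set of atoms, given by its characteristic function. *)
Definition interp (A : Type) := A -> bool.

Fixpoint sat {A : Type} (X : interp A) (F : form A) : bool :=
  match F with
  | Bot => false
  | Atom a => X a
  | And F G => sat X F && sat X G
  | Or F G => sat X F || sat X G
  | Imp F G => negb (sat X F) || sat X G
  end.

Definition theory (A : Type) := form A -> Prop.

Definition sat_theory {A : Type} (X : interp A) (T : theory A) : Prop :=
  forall F, T F -> sat X F = true.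

Definition class_equiv {A : Type} (T1 T2 : theory A) : Prop :=
  forall Y : interp A, sat_theory Y T1 <-> sat_theory Y T2.

Definition bot_theory (A : Type) : theory A := fun F => F = Bot.

Fixpoint reduct {A : Type} (X : interp A) (F : form A) : form A :=
  match F with
  | Bot => Bot
  | Atom a => if X a then Atom a else Bot
  | And F1 F2 => if sat X F then And (reduct X F1) (reduct X F2) else Bot
  | Or F1 F2 => if sat X F then Or (reduct X F1) (reduct X F2) else Bot
  | Imp F1 F2 => if sat X F then Imp (reduct X F1) (reduct X F2) else Bot
  end.

Definition reduct_theory {A : Type} (X : interp A) (T : theory A) : theory A :=
  fun H => exists F, T F /\ H = reduct X F.

(* Nested expressions: the only implications are of the form F -> bot
   (which includes top = bot -> bot). *)
Fixpoint nested {A : Type} (F : form A) : Prop :=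
  match F with
  | Bot => True
  | Atom _ => True
  | And F1 F2 => nested F1 /\ nested F2
  | Or F1 F2 => nested F1 /\ nested F2
  | Imp F1 F2 => nested F1 /\ F2 = Bot
  end.

(* A rule  F <- G  (F, G nested) is the formula G -> F; a program is a set
   of such rules. *)
Definition is_rule {A : Type} (R : form A) : Prop :=
  exists G F, nested G /\ nested F /\ R = Imp G F.

Definition program {A : Type} (P : theory A) : Prop :=
  forall R, P R -> is_rule R.

(* Lifschitz-Tang-Turner reduct of a nested expression: each maximal
   subformula of the form (neg F) is replaced by top if X |= neg F and by
   bot otherwise. *)
Fixpoint ltt {A : Type} (X : interp A) (F : form A) : form A :=
  match F with
  | Bot => Bot
  | Atom a => Atom a
  | And F1 F2 => And (ltt X F1) (ltt X F2)
  | Or F1 F2 => Or (ltt X F1) (ltt X F2)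
  | Imp F1 Bot => if sat X (Neg F1) then Top else Bot
  | Imp F1 F2 => Imp (ltt X F1) (ltt X F2)  (* not a nested expression *)
  end.

Definition ltt_rule {A : Type} (X : interp A) (R : form A) : form A :=
  match R with
  | Imp G F => Imp (ltt X G) (ltt X F)
  | _ => R
  end.

Definition ltt_program {A : Type} (X : interp A) (P : theory A) : theory A :=
  fun H => exists R, P R /\ H = ltt_rule X R.

Fixpoint kill {A : Type} (X : interp A) (F : form A) : form A :=
  match F with
  | Bot => Bot
  | Atom a => if X a then Atom a else Bot
  | And F1 F2 => And (kill X F1) (kill X F2)
  | Or F1 F2 => Or (kill X F1) (kill X F2)
  | Imp F1 F2 => Imp (kill X F1) (kill X F2)
  end.

Definition kill_theory {A : Type} (X : interp A) (T : theory A) : theory A :=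
  fun H => exists F, T F /\ H = kill X F.

(* Main.v *)
Require Import Defs.
From Stdlib Require Import Bool Classical.

Lemma reduct_false {A} (X : interp A) F : sat X F = false -> reduct X F = Bot.
Proof. destruct F; simpl; intros H; try rewrite H; auto.
Qed.

Lemma key {A} (X : interp A) (Y : interp A) F :
  nested F -> sat Y (reduct X F) = sat Y (kill X (ltt X F)).
Proof.
  induction F as [|a|F1 IH1 F2 IH2|F1 IH1 F2 IH2|F1 IH1 F2 IH2]; simpl; intros Hn.
  - reflexivity.
  - destruct (X a); reflexivity.
  - destruct Hn as [H1 H2]. rewrite <- (IH1 H1), <- (IH2 H2).
    destruct (sat X F1) eqn:E1; destruct (sat X F2) eqn:E2; simpl; auto;
      rewrite ?(reduct_false X F1 E1), ?(reduct_false X F2 E2); simpl;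
      auto using andb_false_r.
  - destruct Hn as [H1 H2]. rewrite <- (IH1 H1), <- (IH2 H2).
    destruct (sat X F1) eqn:E1; destruct (sat X F2) eqn:E2; simpl; auto;
      rewrite ?(reduct_false X F1 E1), ?(reduct_false X F2 E2); simpl; auto.
  - destruct Hn as [H1 H2]. subst F2. simpl.
    destruct (sat X F1) eqn:E1; simpl; auto.
    rewrite (reduct_false X F1 E1). simpl. reflexivity.
Qed.

Theorem proposition1 (A : Type) (P : theory A) (X : interp A) :
  program P ->
  (~ sat_theory X P -> class_equiv (reduct_theory X P) (@bot_theory A)) /\
  (sat_theory X P ->
     class_equiv (reduct_theory X P) (kill_theory X (ltt_program X P))).
Proof.
  intros HP. split.
  - intros Hn Y. assert (exists R, P R /\ sat X R = false) as [R [HR HX]].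
    { apply Classical_Prop.NNPP. intros C. apply Hn. intros F HF.
      destruct (sat X F) eqn:E; auto. exfalso; apply C; eauto. }
    split; intros HY.
    + exfalso. assert (H := HY (reduct X R) (ex_intro _ R (conj HR eq_refl))).
      rewrite (reduct_false X R HX) in H. discriminate.
    + exfalso. assert (H := HY Bot eq_refl). discriminate.
  - intros HX Y.
    assert (Hr : forall R, P R -> sat Y (reduct X R) = sat Y (kill X (ltt_rule X R))).
    { intros R HR. destruct (HP R HR) as [G [F [HG [HF ->]]]].
      pose proof (HX _ HR) as E. simpl in E |- *. rewrite E. simpl.
      rewrite (key X Y G HG), (key X Y F HF). reflexivity. }
    split; intros HY H HH.
    + destruct HH as [H' [[R [HR ->]] ->]]. rewrite <- Hr by auto.
      apply HY. exists R; auto.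
    + destruct HH as [R [HR ->]]. rewrite Hr by auto.
      apply HY. exists (ltt_rule X R). split; auto. exists R; auto.
Qed.
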